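(* Let $D$ be a positive integer that is not a perfect square, let $(t_1,u_1)$ be the least strictly positive integer solution of $X^2-DY^2=1$, $\epsilon=t_1+u_1\sqrt D$, and $\epsilon^k=t_k+u_k\sqrt D$ for $k\in\mathbb{Z}$. For a positive integer $m$ let $P(m)$ be the least positive integer $P$ with $t_{k+P}\equiv t_k$ and $u_{k+P}\equiv u_k\pmod m$ for all $k$. Then for every positive integer $m$, $$P(m)\le 2m(\log m+1).$$
   Context: Logarithms: $\log x=\log_2|x|$ if $|x|\ge4$, and $\log x=2$ if $|x|<4$. *)

(* Defs.v *)
From Stdlib Require Import ZArith Reals Lra Lia.
Open Scope Z_scope.

(* Logarithm convention of the paper: log x = log_2 |x| if |x| >= 4, else 2. *)
Definition plog (x : R) : R :=
  if Rle_dec 4 (Rabs x) then (ln (Rabs x) / ln 2)%R else 2%R.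

Definition fundamental_solution (D t1 u1 : Z) : Prop :=
  0 < t1 /\ 0 < u1 /\ t1 ^ 2 - D * u1 ^ 2 = 1 /\
  (forall t u : Z, 0 < t -> 0 < u -> t ^ 2 - D * u ^ 2 = 1 -> t1 <= t /\ u1 <= u).

(* eps^n = t_n + u_n sqrt D for n : nat, eps = t1 + u1 sqrt D. *)
Fixpoint pell_pow_nat (D t1 u1 : Z) (n : nat) : Z * Z :=
  match n with
  | O => (1, 0)
  | S n' => let (t, u) := pell_pow_nat D t1 u1 n' in
            (t1 * t + D * u1 * u, t1 * u + u1 * t)
  end.

(* eps^k for k : Z; eps^{-1} = t1 - u1 sqrt D, hence eps^{-n} = t_n - u_n sqrt D. *)
Definition pell_pow (D t1 u1 : Z) (k : Z) : Z * Z :=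
  if 0 <=? k then pell_pow_nat D t1 u1 (Z.to_nat k)
  else let (t, u) := pell_pow_nat D t1 u1 (Z.to_nat (- k)) in (t, - u).

Definition pell_t (D t1 u1 k : Z) : Z := fst (pell_pow D t1 u1 k).
Definition pell_u (D t1 u1 k : Z) : Z := snd (pell_pow D t1 u1 k).

Definition is_period (D t1 u1 m P : Z) : Prop :=
  forall k : Z,
    Z.modulo (pell_t D t1 u1 (k + P)) m = Z.modulo (pell_t D t1 u1 k) m /\
    Z.modulo (pell_u D t1 u1 (k + P)) m = Z.modulo (pell_u D t1 u1 k) m.

Definition is_least_period (D t1 u1 m P : Z) : Prop :=
  0 < P /\ is_period D t1 u1 m P /\
  (forall Q : Z, 0 < Q -> is_period D t1 u1 m Q -> P <= Q).

(* Main.v *)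
Require Import Defs.
From Stdlib Require Import ZArith Reals Znumtheory Lia Lra Classical.
Definition pm (D : Z) (x y : Z*Z) : Z*Z := (fst x * fst y + D * snd x * snd y, fst x * snd y + snd x * fst y)%Z.
Fixpoint zpow (a : Z) (n : nat) : Z := match n with O => 1%Z | S n => (a * zpow a n)%Z end.
Fixpoint pp D x n := match n with O => (1,0)%Z | S n => pm D x (pp D x n) end.

Open Scope Z_scope.

Definition pcong (m : Z) (x y : Z*Z) : Prop :=
  (m | fst x - fst y) /\ (m | snd x - snd y).
Definition pconj (x : Z*Z) : Z*Z := (fst x, - snd x).
Definition nrm (D : Z) (x : Z*Z) : Z := fst x * fst x - D * snd x * snd x.

Lemma pm_assoc D x y z : pm D x (pm D y z) = pm D (pm D x y) z.
Proof. destruct x, y, z; unfold pm; cbn [fst snd]; f_equal; ring. Qed.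
Lemma pm_comm' D x y : pm D x y = pm D y x.
Proof. destruct x, y; unfold pm; cbn [fst snd]; f_equal; ring. Qed.
Lemma pm_1l D x : pm D (1,0) x = x.
Proof. destruct x; unfold pm; cbn [fst snd]; f_equal; ring. Qed.
Lemma pm_1r D x : pm D x (1,0) = x.
Proof. destruct x; unfold pm; cbn [fst snd]; f_equal; ring. Qed.

Lemma pp_add D x a b : pp D x (a + b) = pm D (pp D x a) (pp D x b).
Proof.
  induction a as [|a IH]; simpl.
  - now rewrite pm_1l.
  - now rewrite IH, pm_assoc.
Qed.

Lemma pp_mul D x a b : pp D x (a * b) = pp D (pp D x a) b.
Proof.
  induction b as [|b IH].
  - now rewrite Nat.mul_0_r.
  - rewrite Nat.mul_succ_r, pp_add, IH. simpl. apply pm_comm'.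
Qed.

Lemma pp_one D n : pp D (1,0) n = (1,0).
Proof. induction n; simpl; [reflexivity| rewrite IHn; apply pm_1l]. Qed.

Lemma pcong_refl m x : pcong m x x.
Proof. split; exists 0; ring. Qed.
Lemma pcong_sym m x y : pcong m x y -> pcong m y x.
Proof. intros [[a Ha] [b Hb]]; split; [exists (-a)|exists (-b)]; lia. Qed.
Lemma pcong_trans m x y z : pcong m x y -> pcong m y z -> pcong m x z.
Proof. intros [[a Ha] [b Hb]] [[c Hc] [d Hd]]; split; [exists (a+c)|exists (b+d)]; lia. Qed.

Lemma pcong_pm D m x x' y y' : pcong m x x' -> pcong m y y' -> pcong m (pm D x y) (pm D x' y').
Proof.
  destruct x as [x1 x2], x', y as [y1 y2], y'; unfold pcong, pm; simpl.
  intros [[a Ha] [b Hb]] [[c Hc] [d Hd]].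
  assert (x1 = z + a*m) by lia. assert (x2 = z0 + b*m) by lia.
  assert (y1 = z1 + c*m) by lia. assert (y2 = z2 + d*m) by lia. subst.
  split.
  - exists (z*c + a*z1 + a*c*m + D*(z0*d + b*z2 + b*d*m)); ring.
  - exists (z*d + a*z2 + a*d*m + z0*c + b*z1 + b*c*m); ring.
Qed.

Lemma pcong_pp D m x y n : pcong m x y -> pcong m (pp D x n) (pp D y n).
Proof.
  intros H; induction n; simpl; [apply pcong_refl| now apply pcong_pm].
Qed.

Lemma pcong_pow1 D m x n : pcong m x (1,0) -> pcong m (pp D x n) (1,0).
Proof. intros H; rewrite <- (pp_one D n); now apply pcong_pp. Qed.

Lemma pcong_conj m x y : pcong m x y -> pcong m (pconj x) (pconj y).
Proof. destruct x, y; unfold pcong, pconj; simpl. intros [[a Ha] [b Hb]]; split; [exists a|exists (-b)]; lia. Qed.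

Lemma nrm_pm D x y : nrm D (pm D x y) = nrm D x * nrm D y.
Proof. destruct x, y; unfold nrm, pm; cbn [fst snd]; ring. Qed.

Lemma pm_conj D x : pm D x (pconj x) = (nrm D x, 0).
Proof. destruct x; unfold pm, pconj, nrm; cbn [fst snd]; f_equal; ring. Qed.

Lemma nrm_pp D x n : nrm D x = 1 -> nrm D (pp D x n) = 1.
Proof.
  intros H; induction n; simpl.
  - unfold nrm; cbn [fst snd pp]; ring.
  - now rewrite nrm_pm, H, IHn.
Qed.

Lemma pcong_div m d x y : (d | m) -> pcong m x y -> pcong d x y.
Proof. intros Hd [H1 H2]; split; eapply Z.divide_trans; eauto. Qed.

Lemma lift_formula D y1 y2 n : exists z1 z2,
  pp D (1 + y1, y2) n =
   (1 + Z.of_nat n * y1 + fst (pm D (pm D (y1,y2) (y1,y2)) (z1,z2)),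
    Z.of_nat n * y2 + snd (pm D (pm D (y1,y2) (y1,y2)) (z1,z2))).
Proof.
  induction n as [|n [z1 [z2 IH]]].
  - exists 0, 0; unfold pm; cbn [pp fst snd Z.of_nat]; f_equal; ring.
  - exists (z1 + Z.of_nat n + fst (pm D (y1,y2) (z1,z2))), (z2 + snd (pm D (y1,y2) (z1,z2))).
    change (pp D (1 + y1, y2) (S n)) with (pm D (1 + y1, y2) (pp D (1 + y1, y2) n)); rewrite IH, Nat2Z.inj_succ; unfold pm; cbn [fst snd]; f_equal; ring.
Qed.

Lemma lift D x k p : (p | k) -> pcong k x (1,0) -> pcong (p*k) (pp D x (Z.to_nat p)) (1,0).
Proof.
  intros [c Hc] [[a Ha] [b Hb]]. destruct x as [x1 x2]; simpl in *.
  destruct (Z_le_gt_dec 0 p) as [Hp|Hp].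
  2:{ replace (Z.to_nat p) with 0%nat by lia. cbn [pp fst snd]. split; exists 0; lia. }
  assert (x1 = 1 + a*k) by lia. assert (x2 = b*k) by lia. subst x1 x2.
  destruct (lift_formula D (a*k) (b*k) (Z.to_nat p)) as [z1 [z2 E]].
  rewrite E, Z2Nat.id by lia. unfold pcong, pm; cbn [fst snd]. subst k.
  split.
  - exists (a + c*((a*a + D*b*b)*z1 + D*(2*a*b)*z2)); ring.
  - exists (b + c*((a*a + D*b*b)*z2 + (2*a*b)*z1)); ring.
Qed.

Lemma pell_pow_nat_pp D t1 u1 n : pell_pow_nat D t1 u1 n = pp D (t1,u1) n.
Proof.
  induction n as [|n IH]; [reflexivity|].
  cbn [pell_pow_nat pp]. rewrite IH. destruct (pp D (t1,u1) n) as [t u].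
  unfold pm; cbn [fst snd]; f_equal; ring.
Qed.

Lemma pell_pow_eq D t1 u1 k : pell_pow D t1 u1 k =
  if 0 <=? k then pp D (t1,u1) (Z.to_nat k) else pconj (pp D (t1,u1) (Z.to_nat (-k))).
Proof.
  unfold pell_pow; rewrite !pell_pow_nat_pp.
  destruct (0 <=? k); [reflexivity|]. destruct (pp D (t1,u1) (Z.to_nat (-k))); reflexivity.
Qed.

Lemma mod_eq_of_div m a b : 0 < m -> (m | a - b) -> a mod m = b mod m.
Proof.
  intros Hm [c Hc]. replace a with (b + c * m) by lia.
  apply Z.mod_add; lia.
Qed.

Lemma period_of D t1 u1 m Q : nrm D (t1,u1) = 1 -> 0 < m ->
  pcong m (pp D (t1,u1) Q) (1,0) -> is_period D t1 u1 m (Z.of_nat Q).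
Proof.
  intros Hn Hm HQ k.
  assert (H : pcong m (pell_pow D t1 u1 (k + Z.of_nat Q)) (pell_pow D t1 u1 k)).
  { rewrite !pell_pow_eq.
    destruct (Z.leb_spec 0 k) as [Hk|Hk].
    - destruct (Z.leb_spec 0 (k + Z.of_nat Q)) as [_|]; [|lia].
      replace (Z.to_nat (k + Z.of_nat Q)) with (Z.to_nat k + Q)%nat by lia.
      rewrite pp_add. rewrite <- (pm_1r D (pp D (t1,u1) (Z.to_nat k))) at 2.
      apply pcong_pm; [apply pcong_refl | exact HQ].
    - destruct (Z.leb_spec 0 (k + Z.of_nat Q)) as [Hk2|Hk2].
      + set (n := Z.to_nat (-k)).
        assert (Hn' : (n <= Q)%nat) by (unfold n; lia).
        replace (Z.to_nat (k + Z.of_nat Q)) with (Q - n)%nat by (unfold n; lia).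
        set (A := pp D (t1,u1) (Q - n)). set (B := pp D (t1,u1) n).
        assert (HAB : pm D A B = pp D (t1,u1) Q).
        { unfold A, B; rewrite <- pp_add. f_equal. lia. }
        assert (HB : nrm D B = 1) by (apply nrm_pp; exact Hn).
        replace A with (pm D (pm D A B) (pconj B)).
        2:{ rewrite <- pm_assoc, pm_conj, HB. apply pm_1r. }
        rewrite <- (pm_1l D (pconj B)) at 2.
        apply pcong_pm; [rewrite HAB; exact HQ | apply pcong_refl].
      + replace (Z.to_nat (- k)) with (Z.to_nat (- (k + Z.of_nat Q)) + Q)%nat by lia.
        apply pcong_conj. rewrite pp_add.
        rewrite <- (pm_1r D (pp D (t1,u1) (Z.to_nat (- (k + Z.of_nat Q))))) at 1.
        apply pcong_pm; [apply pcong_refl | apply pcong_sym; exact HQ]. }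
  destruct H as [H1 H2]. unfold pell_t, pell_u. split; apply mod_eq_of_div; auto.
Qed.

Lemma least_exists (Per : Z -> Prop) Q : 0 < Q -> Per Q ->
  exists P, (0 < P /\ Per P /\ (forall Q', 0 < Q' -> Per Q' -> P <= Q')) /\ P <= Q.
Proof.
  intros HQ HP.
  assert (Hgen : forall N : nat, forall Q, 0 < Q -> (Z.to_nat Q <= N)%nat -> Per Q ->
    exists P, (0 < P /\ Per P /\ (forall Q', 0 < Q' -> Per Q' -> P <= Q')) /\ P <= Q).
  { induction N as [|N IH]; intros Q0 H0 HN HP0; [lia|].
    destruct (classic (exists Q', 0 < Q' < Q0 /\ Per Q')) as [[Q' [HQ' HP']]|Hno].
    - destruct (IH Q') as [P [HP1 HP2]]; [lia|lia|exact HP'|].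
      exists P; split; [exact HP1|lia].
    - exists Q0; split; [|lia]. split; [exact H0|split; [exact HP0|]].
      intros Q' H1 H2. destruct (Z_le_gt_dec Q0 Q') as [|Hlt]; [assumption|].
      exfalso; apply Hno; exists Q'; split; [lia|exact H2]. }
  exact (Hgen (Z.to_nat Q) Q HQ (le_n _) HP).
Qed.

Lemma div_comb p k c : prime p -> ~ (p | k) -> (p | c) -> (k | c) -> (p * k | c).
Proof.
  intros Hp Hk Hpc [j Hj]. subst c.
  destruct (prime_mult p Hp j k Hpc) as [[i Hi]|H]; [|contradiction].
  subst j. exists i. ring.
Qed.

Lemma pcong_comb p k x : prime p -> ~ (p | k) -> pcong p x (1,0) -> pcong k x (1,0) -> pcong (p*k) x (1,0).
Proof.
  intros Hp Hk [a1 a2] [b1 b2]; split; apply div_comb; auto.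
Qed.

Lemma zpow_add a n k : zpow a (n + k) = zpow a n * zpow a k.
Proof. induction n as [|n IH]; cbn [zpow Nat.add]; [ring| rewrite IH; ring]. Qed.

Lemma zpow_cong m a b n : (m | a - b) -> (m | zpow a n - zpow b n).
Proof.
  intros [c Hc]. assert (a = b + c*m) by lia. subst a.
  induction n as [|n [d Hd]]; cbn [zpow].
  - exists 0; ring.
  - exists ((b + c*m) * d + zpow b n * c).
    replace (zpow (b + c*m) n) with (zpow b n + d*m) by lia. ring.
Qed.

Lemma pp_a0 D a n : pp D (a,0) n = (zpow a n, 0).
Proof.
  induction n as [|n IH]; [reflexivity|]. cbn [pp zpow]. rewrite IH.
  unfold pm; cbn [fst snd]; f_equal; ring.
Qed.

Lemma pp_0b D b k : pp D (0,b) (2*k) = (zpow b (2*k) * zpow D k, 0) /\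
  pp D (0,b) (S (2*k)) = (0, zpow b (S (2*k)) * zpow D k).
Proof.
  induction k as [|k [IH1 IH2]].
  - split; [reflexivity|]. change (2*0)%nat with 0%nat. cbn [pp zpow]. unfold pm; cbn [fst snd]; f_equal; ring.
  - replace (2 * S k)%nat with (S (S (2*k))) by lia.
    assert (E1 : pp D (0,b) (S (S (2*k))) = (zpow b (S (S (2*k))) * zpow D (S k), 0)).
    { change (pp D (0,b) (S (S (2*k)))) with (pm D (0,b) (pp D (0,b) (S (2*k)))).
      rewrite IH2. unfold pm; cbn [fst snd zpow]; f_equal; ring. }
    split; [exact E1|].
    change (pp D (0,b) (S (S (S (2*k))))) with (pm D (0,b) (pp D (0,b) (S (S (2*k))))).
    rewrite E1. unfold pm; cbn [fst snd zpow]; f_equal; ring.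
Qed.

Lemma case2 D t u : nrm D (t,u) = 1 -> pcong 2 (pp D (t,u) 2) (1,0).
Proof.
  unfold nrm; cbn [fst snd]; intros H.
  cbn [pp]. unfold pcong, pm; cbn [fst snd]. split.
  - exists (D*u*u). nia.
  - exists (t*u). ring.
Qed.

Lemma caseD D t u p : nrm D (t,u) = 1 -> 0 <= p -> (p | D) -> pcong p (pp D (t,u) (2 * Z.to_nat p)) (1,0).
Proof.
  unfold nrm; cbn [fst snd]; intros H Hp [d Hd].
  rewrite pp_mul.
  replace (pp D (t,u) 2) with (1 + 2*D*u*u, 2*t*u).
  2:{ cbn [pp]; unfold pm; cbn [fst snd]; f_equal; nia. }
  destruct (lift_formula D (2*D*u*u) (2*t*u) (Z.to_nat p)) as [z1 [z2 E]].
  rewrite E, Z2Nat.id by lia. unfold pcong, pm; cbn [fst snd]. subst D.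
  split.
  - exists (2*d*p*u*u + (4*d*d*p*u*u*u*u + 4*d*t*t*u*u)*z1 + d*(8*d*p*u*u*u*t)*z2). ring.
  - exists (2*t*u + (4*d*d*p*u*u*u*u + 4*d*t*t*u*u)*z2 + 8*d*u*u*u*t*z1). ring.
Qed.
Module Frob.
From mathcomp Require Import all_boot all_algebra ssrZ ring.
Import GRing.Theory.
Local Open Scope ring_scope.
Lemma natmulZ (z : Z) n : z *+ n = Z.mul z (Z.of_nat n).
Proof. elim: n => [|n IH]; first by rewrite mulr0n /=; lia.
rewrite mulrS IH Nat2Z.inj_succ. change (Z.add z (Z.mul z (Z.of_nat n)) = Z.mul z (Z.succ (Z.of_nat n))). lia. Qed.
Lemma exprZ' (z : Z) n : z ^+ n = zpow z n.
Proof. elim: n => [|n IH]; first by [].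
by rewrite exprS IH. Qed.
Lemma prime_bridge p : Znumtheory.prime (Z.of_nat p) -> prime p.
Proof.
move=> hp; apply/primeP; split.
  apply/ltP; have := prime_ge_2 _ hp; lia.
move=> d /dvdnP [q hq].
have hd : Z.divide (Z.of_nat d) (Z.of_nat p).
  by exists (Z.of_nat q); rewrite hq Nat2Z.inj_mul.
case: (prime_divisors _ hp _ hd) => [h|[h|[h|h]]].
- lia.
- by apply/orP; left; apply/eqP; lia.
- by apply/orP; right; apply/eqP; lia.
- have := prime_ge_2 _ hp; lia.
Qed.
Lemma freshman (R : pzRingType) (x y : R) p : prime p -> GRing.comm x y ->
  exists w, (x + y) ^+ p = x ^+ p + y ^+ p + w *+ p.
Proof.
move=> pr cxy.
have p0 : (0 < p)%N by apply: prime_gt0.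
rewrite exprDn_comm //.
case: p pr p0 => // p pr _.
rewrite big_ord_recr big_ord_recl /=.
exists (\sum_(i < p) (x ^+ (p.+1 - bump 0 i) * y ^+ bump 0 i) *+ ('C(p.+1, bump 0 i) %/ p.+1)).
rewrite subn0 subnn bin0 binn expr0 mulr1 mul1r -sumrMnl !mulr1n.
rewrite addrAC; congr (_ + _).
apply: eq_bigr => i _; rewrite -mulrnA divnK //.
apply: prime_dvd_bin => //.
rewrite /bump /= add1n ltnS ltn_ord //.
Qed.
Lemma frZ (x : Z) p : Znumtheory.prime (Z.of_nat p) -> exists w,
  zpow (Z.add x 1) p = Z.add (Z.add (zpow x p) 1) (Z.mul w (Z.of_nat p)).
Proof.
move=> hp; have [w h] := @freshman _ x 1 p (@prime_bridge p hp) (commr1 x).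
exists w; rewrite -!exprZ' -natmulZ h expr1n. done.
Qed.
Definition Mx (D : Z) (x : Z*Z) : 'M[Z]_2 :=
  \matrix_(i<2, j<2) (if (i:nat) == j then x.1 else if (i:nat) == 0%N then Z.mul D x.2 else x.2).
Lemma Mx_mul D x y : Mx D x * Mx D y = Mx D (pm D x y).
Proof.
rewrite -mulmxE; apply/matrixP => i j; rewrite !mxE !big_ord_recl big_ord0 !mxE.
case: i => [[|[|//]] Hi]; case: j => [[|[|//]] Hj]; rewrite /= /pm /=.
all: ring.
Qed.
Lemma Mx_add D a b : Mx D (a, Z0) + Mx D (Z0, b) = Mx D (a, b).
Proof.
apply/matrixP => i j; rewrite !mxE.
case: i => [[|[|//]] Hi]; case: j => [[|[|//]] Hj]; rewrite /=; ring.
Qed.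
Lemma Mx_one D : Mx D ((Zpos xH), Z0) = 1.
Proof.
apply/matrixP => i j; rewrite !mxE.
case: i => [[|[|//]] Hi]; case: j => [[|[|//]] Hj]; rewrite /=; ring.
Qed.
Lemma Mx_pp D x n : Mx D (pp D x n) = Mx D x ^+ n.
Proof.
elim: n => [|n IH] /=; first by rewrite Mx_one.
by rewrite exprS -IH Mx_mul.
Qed.
Lemma pm_comm D x y : pm D x y = pm D y x.
Proof. rewrite /pm; f_equal; ring. Qed.
Lemma mxnat (W : 'M[Z]_2) n i j : (W *+ n) i j = W i j *+ n.
Proof.
elim: n => [|n IH]; first by rewrite !mulr0n mxE.
by rewrite !mulrS mxE IH.
Qed.
Lemma frob_pp D a b p : Znumtheory.prime (Z.of_nat p) -> exists w1 w2,
  fst (pp D (a,b) p) = Z.add (Z.add (fst (pp D (a,Z0) p)) (fst (pp D (Z0,b) p))) (Z.mul w1 (Z.of_nat p)) /\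
  snd (pp D (a,b) p) = Z.add (Z.add (snd (pp D (a,Z0) p)) (snd (pp D (Z0,b) p))) (Z.mul w2 (Z.of_nat p)).
Proof.
move=> hp.
have cm : GRing.comm (Mx D (a, Z0)) (Mx D (Z0, b)).
  by rewrite /GRing.comm !Mx_mul pm_comm.
have [W hW] := @freshman _ _ _ p (@prime_bridge p hp) cm.
rewrite Mx_add -!Mx_pp in hW.
exists (W 0 0), (W 1 0); split.
- have := congr1 (fun M : 'M[Z]_2 => M 0 0) hW; rewrite !mxE mxnat /= => ->.
  by rewrite natmulZ.
- have := congr1 (fun M : 'M[Z]_2 => M 1 0) hW; rewrite !mxE mxnat /= => ->.
  by rewrite natmulZ.
Qed.
End Frob.

Open Scope Z_scope.

Lemma fermat p a : prime p -> (p | zpow a (Z.to_nat p) - a).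
Proof.
  intros Hp. pose proof (prime_ge_2 p Hp) as H2.
  assert (Hpn : Z.of_nat (Z.to_nat p) = p) by lia.
  assert (Hp' : prime (Z.of_nat (Z.to_nat p))) by (rewrite Hpn; exact Hp).
  assert (Hnat : forall n : nat, (p | zpow (Z.of_nat n) (Z.to_nat p) - Z.of_nat n)).
  { induction n as [|n [c Hc]].
    - destruct (Z.to_nat p) eqn:E; [lia|]. exists 0. cbn [zpow Z.of_nat]. ring.
    - destruct (Frob.frZ (Z.of_nat n) (Z.to_nat p) Hp') as [w Hw].
      rewrite Nat2Z.inj_succ. unfold Z.succ. rewrite Hw, Hpn.
      exists (c + w). lia. }
  assert (Hr : 0 <= a mod p) by (apply Z.mod_pos_bound; lia).
  pose proof (Hnat (Z.to_nat (a mod p))) as Hn. rewrite Z2Nat.id in Hn by lia.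
  assert (Hd : (p | a - a mod p)).
  { exists (a / p). pose proof (Z.div_mod a p). lia. }
  pose proof (zpow_cong p a (a mod p) (Z.to_nat p) Hd) as Hc.
  destruct Hd as [x1 H1], Hn as [x2 H2'], Hc as [x3 H3].
  exists (x3 + x2 - x1). lia.
Qed.

Lemma euler p D k : prime p -> ~ (p | D) -> Z.to_nat p = S (2*k) ->
  (p | zpow D k - 1) \/ (p | zpow D k + 1).
Proof.
  intros Hp HD Hk.
  pose proof (fermat p D Hp) as HF. rewrite Hk in HF.
  replace (zpow D (S (2*k)) - D) with (D * ((zpow D k - 1) * (zpow D k + 1))) in HF.
  2:{ cbn [zpow]. replace (2*k)%nat with (k+k)%nat by lia. rewrite zpow_add. ring. }
  destruct (prime_mult p Hp _ _ HF) as [H|H]; [contradiction|].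
  exact (prime_mult p Hp _ _ H).
Qed.


Lemma caseOdd D t u p k : prime p -> Z.to_nat p = S (2*k) -> ~ (p | D) -> nrm D (t,u) = 1 ->
  pcong p (pp D (t,u) (2*k)) (1,0) \/ pcong p (pp D (t,u) (2 * S k)) (1,0).
Proof.
  intros Hp Hk HD Hn. pose proof (prime_ge_2 p Hp) as H2.
  assert (Hpn : Z.of_nat (S (2*k)) = p) by lia.
  assert (Hp' : prime (Z.of_nat (S (2*k)))) by (rewrite Hpn; exact Hp).
  destruct (Frob.frob_pp D t u (S (2*k)) Hp') as [w1 [w2 [E1 E2]]].
  rewrite pp_a0 in E1, E2. destruct (pp_0b D u k) as [_ E3]. rewrite E3 in E1, E2.
  cbn [fst snd] in E1, E2. rewrite Hpn in E1, E2.
  pose proof (fermat p t Hp) as [ft Hft]. pose proof (fermat p u Hp) as [fu Hfu].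
  rewrite Hk in Hft, Hfu.
  set (c := zpow D k) in *.
  set (e := (t,u)).
  assert (Hconj : pm D e (pconj e) = (1,0)) by (unfold e; rewrite pm_conj, Hn; reflexivity).
  destruct (euler p D k Hp HD Hk) as [[g Hg]|[g Hg]].
  - left.
    assert (Hfe : pcong p (pp D e (S (2*k))) e).
    { unfold pcong, e; cbn [fst snd]. rewrite E1, E2. split.
      - exists (ft + w1). lia.
      - exists (fu * c + u * g + w2).
        replace (zpow u (S (2 * k)) * c) with ((u + fu * p) * c) by (f_equal; lia).
        assert (Hc : c = 1 + g * p) by (unfold c; lia). rewrite Hc. ring. }
    set (A := pp D e (2*k)).
    replace A with (pm D (pm D e A) (pconj e)).
    2:{ rewrite (pm_comm' D e A), <- pm_assoc, Hconj. apply pm_1r. }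
    rewrite <- Hconj. apply pcong_pm; [exact Hfe|apply pcong_refl].
  - right.
    assert (Hfe : pcong p (pp D e (S (2*k))) (pconj e)).
    { unfold pcong, pconj, e; cbn [fst snd]. rewrite E1, E2. split.
      - exists (ft + w1). lia.
      - exists (fu * c + u * g + w2).
        replace (zpow u (S (2 * k)) * c) with ((u + fu * p) * c) by (f_equal; lia).
        assert (Hc : c = -1 + g * p) by (unfold c; lia). rewrite Hc. ring. }
    replace (2 * S k)%nat with (S (S (2*k))) by lia.
    change (pp D e (S (S (2*k)))) with (pm D e (pp D e (S (2*k)))).
    rewrite <- Hconj. apply pcong_pm; [apply pcong_refl|exact Hfe].
Qed.

Lemma local_period D t u p : nrm D (t,u) = 1 -> prime p ->
  exists f : nat, (1 <= f)%nat /\ Z.of_nat f <= p /\ pcong p (pp D (t,u) (2*f)) (1,0).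
Proof.
  intros Hn Hp. pose proof (prime_ge_2 p Hp) as H2.
  destruct (Z.eq_dec p 2) as [E|Hne2].
  { subst p. exists 1%nat. split; [lia|split; [lia|]]. apply case2; exact Hn. }
  destruct (Zdivide_dec p D) as [HD|HD].
  { exists (Z.to_nat p). split; [lia|split; [lia|]]. apply caseD; [exact Hn|lia|exact HD]. }
  assert (Hodd : p mod 2 = 1).
  { pose proof (Z.mod_pos_bound p 2 ltac:(lia)) as Hb.
    destruct (Z.eq_dec (p mod 2) 0) as [H0|H0]; [|lia].
    assert (H2p : (2 | p)) by (apply Z.mod_divide; lia).
    destruct (prime_divisors p Hp 2 H2p) as [h|[h|[h|h]]]; lia. }
  pose proof (Z.div_mod p 2 ltac:(lia)) as Hdm.
  set (k := Z.to_nat (p / 2)).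
  assert (Hk : Z.to_nat p = S (2*k)) by (unfold k; lia).
  assert (Hk1 : (1 <= k)%nat) by (unfold k; lia).
  destruct (caseOdd D t u p k Hp Hk HD Hn) as [H|H].
  - exists k. split; [exact Hk1|split; [unfold k; lia|exact H]].
  - exists (S k). split; [lia|split; [unfold k; lia|exact H]].
Qed.

Lemma prime_div_exists : forall m, 1 < m -> exists p, prime p /\ (p | m).
Proof.
  assert (G : forall N : nat, forall m, 1 < m -> (Z.to_nat m <= N)%nat -> exists p, prime p /\ (p | m)).
  { induction N as [|N IH]; intros m Hm HN; [lia|].
    destruct (prime_dec m) as [Hp|Hp].
    - exists m; split; [exact Hp|apply Z.divide_refl].
    - destruct (not_prime_divide m Hm Hp) as [n [Hn Hnd]].
      destruct (IH n) as [p [Hp1 Hp2]]; [lia|lia|].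
      exists p; split; [exact Hp1|eapply Z.divide_trans; eauto]. }
  intros m Hm. exact (G (Z.to_nat m) m Hm (le_n _)).
Qed.

Lemma main_ex D t u : nrm D (t,u) = 1 -> forall m, 0 < m ->
  exists q : nat, (1 <= q)%nat /\ Z.of_nat q <= m /\ pcong m (pp D (t,u) (2*q)) (1,0).
Proof.
  intros Hn.
  assert (G : forall N : nat, forall m, 0 < m -> (Z.to_nat m <= N)%nat ->
    exists q : nat, (1 <= q)%nat /\ Z.of_nat q <= m /\ pcong m (pp D (t,u) (2*q)) (1,0)).
  { induction N as [|N IH]; intros m Hm HN; [lia|].
    destruct (Z.eq_dec m 1) as [E|Hm1].
    { subst m. exists 1%nat. split; [lia|split; [lia|]]. split; apply Z.divide_1_l. }
    destruct (prime_div_exists m ltac:(lia)) as [p [Hp [k Hk]]].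
    pose proof (prime_ge_2 p Hp) as H2.
    assert (Hk0 : 0 < k) by nia.
    assert (Hkm : k < m) by nia.
    destruct (IH k Hk0 ltac:(lia)) as [q [Hq1 [Hq2 Hq3]]].
    replace m with (p * k) by lia.
    destruct (Zdivide_dec p k) as [Hpk|Hpk].
    - exists (Z.to_nat p * q)%nat. split; [nia|split; [nia|]].
      replace (2 * (Z.to_nat p * q))%nat with ((2 * q) * Z.to_nat p)%nat by lia.
      rewrite pp_mul. apply lift; [exact Hpk|exact Hq3].
    - destruct (local_period D t u p Hn Hp) as [f [Hf1 [Hf2 Hf3]]].
      exists (q * f)%nat. split; [nia|split; [nia|]].
      apply pcong_comb; [exact Hp|exact Hpk| |].
      + replace (2 * (q * f))%nat with ((2 * f) * q)%nat by lia.
        rewrite pp_mul. apply pcong_pow1; exact Hf3.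
      + replace (2 * (q * f))%nat with ((2 * q) * f)%nat by lia.
        rewrite pp_mul. apply pcong_pow1; exact Hq3. }
  intros m Hm. exact (G (Z.to_nat m) m Hm (le_n _)).
Qed.

Lemma plog_nonneg x : (0 <= plog x)%R.
Proof.
  unfold plog. destruct (Rle_dec 4 (Rabs x)) as [H|H]; [|lra].
  assert (H1 : (0 < ln (Rabs x))%R).
  { rewrite <- ln_1. apply ln_increasing; lra. }
  assert (H2 : (0 < ln 2)%R).
  { rewrite <- ln_1. apply ln_increasing; lra. }
  unfold Rdiv. apply Rmult_le_pos; [lra|]. left; apply Rinv_0_lt_compat; exact H2.
Qed.

Theorem mainTheorem15 (D t1 u1 : Z) :
  (0 < D)%Z ->
  (~ exists s : Z, (s * s = D)%Z) ->
  fundamental_solution D t1 u1 ->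
  forall m : Z, (0 < m)%Z ->
    exists P : Z, is_least_period D t1 u1 m P /\
      (IZR P <= 2 * IZR m * (plog (IZR m) + 1))%R.
Proof.
  intros HD Hns [Ht [Hu [Hnorm Hmin]]] m Hm.
  assert (Hn : nrm D (t1,u1) = 1).
  { unfold nrm; cbn [fst snd]. rewrite <- Hnorm. ring. }
  destruct (main_ex D t1 u1 Hn m Hm) as [q [Hq1 [Hq2 Hq3]]].
  pose proof (period_of D t1 u1 m (2*q) Hn Hm Hq3) as Hper.
  destruct (least_exists (is_period D t1 u1 m) (Z.of_nat (2*q)) ltac:(lia) Hper)
    as [P [HP HPle]].
  exists P. split; [exact HP|].
  assert (HP2 : P <= 2 * m) by lia.
  apply IZR_le in HP2. rewrite mult_IZR in HP2.
  pose proof (plog_nonneg (IZR m)) as Hpl.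
  assert (Hm' : (0 < IZR m)%R) by (apply IZR_lt; exact Hm).
  simpl in HP2. nra.
Qed.
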